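(* Let $d$ be a positive integer and let $P = \{x\in\mathbb{R}^d : Ax \le \mathbf{1}\}$ (for a real matrix $A$ with $d$ columns, $\mathbf{1}$ the all-ones vector) satisfy $P\cap\mathbb{Z}^d = \lozenge_d$. Then $Q = \{(x,y)\in\mathbb{R}^{d+1} : A(x - y e_1)\le\mathbf{1},\ -1\le x_1+y\le 1\}$ satisfies $Q \cap \mathbb{Z}^{d+1} = \lozenge_{d+1}$.
   Context: $\lozenge_d = \{0,\pm e_1,\dots,\pm e_d\}\subseteq\mathbb{Z}^d$ is the discrete standard crosspolytope, with $e_i$ the standard unit vectors; in $\mathbb{R}^{d+1}$ a point is written $(x,y)$ with $x\in\mathbb{R}^d$, $y\in\mathbb{R}$, so $\lozenge_{d+1} = (\lozenge_d\times\{0\})\cup\{(0,\pm1)\}$. *)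

(* Defs.v *)
From HB Require Import structures.
From mathcomp Require Import all_boot all_order all_algebra.
From mathcomp Require Import reals.
Set Implicit Arguments. Unset Strict Implicit. Unset Printing Implicit Defensive.
Import Order.TTheory GRing.Theory Num.Theory.
Local Open Scope ring_scope.

Definition intpt (R : realType) (n : nat) (z : 'cV[int]_n) : 'cV[R]_n :=
  map_mx (fun k : int => k%:~R) z.

Definition inPoly (R : realType) (m d : nat) (A : 'M[R]_(m, d)) (x : 'cV[R]_d) : bool :=
  [forall i : 'I_m, (A *m x) i 0 <= 1].

Definition crosspoly (n : nat) (z : 'cV[int]_n) : bool :=
  (z == 0) || [exists i : 'I_n, (z == delta_mx i 0) || (z == - delta_mx i 0)].

(* Main.v *)
Require Import Defs.
From HB Require Import structures.
From mathcomp Require Import all_boot all_order all_algebra.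
From mathcomp Require Import reals.
From mathcomp Require Import zify.
Import Order.TTheory GRing.Theory Num.Theory.
Local Open Scope ring_scope.

Lemma aux1 {a : int} : a != 0 -> 1 <= `|a|.
Proof. lia. Qed.
Lemma aux2 {a b : int} : a + b <= 1 -> 0 <= b -> 1 <= a -> b = 0.
Proof. lia. Qed.
Lemma aux3 {a b : int} : a != 0 -> `|a| + b <= 1 -> 0 <= b -> (a == 1) || (a == -1).
Proof. lia. Qed.
Lemma aux4 (a b r : int) : 0 <= r ->
  ((`|a - b| + r <= 1) && (-1 <= a + b <= 1)) = (`|a| + r + `|b| <= 1).
Proof. move=> h; apply/idP/idP; lia. Qed.

Lemma aux5 (R : numDomainType) (k : int) : (-1 <= (k%:~R : R) <= 1) = (-1 <= k <= 1).
Proof.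
have e1 : (-1 : R) = (-1 : int)%:~R by rewrite rmorphN1.
have e2 : (1 : R) = (1 : int)%:~R by rewrite rmorph1.
by rewrite [in LHS]e1 ler_int [in LHS]e2 ler_int.
Qed.

Lemma crosspolyE (n : nat) (z : 'cV[int]_n) :
  crosspoly z = (\sum_i `|z i 0| <= 1).
Proof.
apply/idP/idP.
- case/orP => [/eqP -> | /existsP [i /orP [] /eqP ->]].
  + by rewrite big1 // => i _; rewrite mxE.
  + rewrite (bigD1 i) //= big1 ?addr0; first by rewrite mxE !eqxx.
    by move=> j /negbTE ji; rewrite mxE ji.
  + rewrite (bigD1 i) //= big1 ?addr0; first by rewrite !mxE !eqxx normrN.
    by move=> j /negbTE ji; rewrite !mxE ji /= oppr0.
- move=> hs; case: (boolP [exists i, z i 0 != 0]) => [/existsP [i hi] | hn].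
  + move: hs; rewrite (bigD1 i) //=; set b := (\sum_(_ | _) _) => hs.
    have h0 : 0 <= b by apply: sumr_ge0.
    have hr : b = 0 by exact: (aux2 hs h0 (aux1 hi)).
    have hz : forall j, j != i -> z j 0 = 0.
      move=> j hj; apply/eqP; rewrite -normr_eq0; apply/eqP.
      exact: (psumr_eq0P (fun j _ => normr_ge0 (z j 0)) hr).
    apply/orP; right; apply/existsP; exists i.
    have : (z i 0 == 1) || (z i 0 == -1) by exact: (aux3 hi hs h0).
    case/orP => /eqP hzi; apply/orP; [left|right]; apply/eqP/matrixP => j k;
      rewrite ord1 !mxE; (case: (eqVneq j i) => [->|ji];
        [by rewrite hzi !eqxx | by rewrite hz // (negbTE ji) ?oppr0]).
  + apply/orP; left; apply/eqP/matrixP => j k; rewrite ord1 mxE.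
    apply/eqP; apply: contraNT hn => h; apply/existsP; exists j; exact: h.
Qed.

Theorem lemma5p3 (R : realType) (d m : nat) (hd : (0 < d)%N) (A : 'M[R]_(m, d)) :
  (forall z : 'cV[int]_d, inPoly A (intpt R z) = crosspoly z) ->
  forall (z : 'cV[int]_d) (w : int),
    (inPoly A (intpt R z - (w%:~R : R) *: delta_mx (Ordinal hd) 0)
     && (-1 <= intpt R z (Ordinal hd) 0 + (w%:~R : R) <= 1))
    = crosspoly (col_mx z (w%:M : 'cV[int]_1)).
Proof.
move=> H z w; set i0 := Ordinal hd.
set z' : 'cV[int]_d := z - w *: delta_mx i0 0.
have -> : intpt R z - (w%:~R : R) *: delta_mx i0 0 = intpt R z'.
  apply/matrixP => i j; rewrite !mxE rmorphB /= rmorphM /=.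
  by rewrite rmorph_nat.
rewrite H.
have -> : (-1 <= intpt R z i0 0 + (w%:~R : R) <= 1) = (-1 <= z i0 0 + w <= 1).
  by rewrite /intpt mxE -(aux5 R) intrD.
rewrite !crosspolyE big_split_ord /= big_ord1.
have e1 : z' i0 0 = z i0 0 - w by rewrite !mxE eqxx mulr1.
have e2 : col_mx z w%:M (lshift 1 i0) 0 = z i0 0 by rewrite col_mxEu.
have e3 : col_mx z (w%:M : 'cV[int]_1) (rshift d ord0) 0 = w by rewrite col_mxEd mxE mulr1n.
have hrest : \sum_(i | i != i0) `|z' i 0| = \sum_(i | i != i0) `|col_mx z w%:M (lshift 1 i) 0|.
  apply: eq_bigr => i /negbTE hi; rewrite col_mxEu !mxE hi /=.
  by rewrite mulr0 subr0.
rewrite (bigD1 i0) // [X in _ = (X + _ <= 1)](bigD1 i0) //=.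
rewrite e1 e2 e3 hrest aux4 //.
by apply: sumr_ge0.
Qed.
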